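(* Let $k\ge1$ and $a_k\in\mathbb{R}$. The sequence $\{a_k n^k \bmod 1\}_{n\ge0}$ in $\mathbb{T}$ has the repetition property if and only if $\liminf_{q\to\infty} q^{k-1}\langle a_k q\rangle = 0$ (with $q$ ranging over positive integers).
   Context: $\mathbb{T}=\mathbb{R}/\mathbb{Z}$ with metric $\mathrm{dist}(x,y)=\langle x-y\rangle$, where for $x\in\mathbb{R}$ (or its class in $\mathbb{T}$), $\langle x\rangle=\min\{|x-p|:p\in\mathbb{Z}\}$ is the distance to the nearest integer. $\mathbb{Z}_+=\{1,2,\ldots\}$. A sequence $\{\omega_n\}_{n\ge0}$ in a metric space $\Omega$ has the repetition property if for every $\varepsilon>0$ and $r \in \mathbb{Z}_+$ there exists $q \in \mathbb{Z}_+$ such that $\mathrm{dist}(\omega_n,\omega_{n+q}) < \varepsilon$ for $n = 0,1,\ldots, rq$. *)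

(* Defs.v *)
From Stdlib Require Import Reals Lra Lia.
Open Scope R_scope.

(* <x> : distance from x to the nearest integer.  [up x] is the unique
   integer with x < up x <= x + 1, so the floor of x is up x - 1. *)
Definition nint_dist (x : R) : R :=
  Rmin (x - (IZR (up x) - 1)) (IZR (up x) - x).

(* Metric on T = R/Z, applied to representatives in R. *)
Definition tdist (x y : R) : R := nint_dist (x - y).

Definition repetition_property (w : nat -> R) : Prop :=
  forall (eps : R) (r : nat), 0 < eps -> (1 <= r)%nat ->
    exists q : nat, (1 <= q)%nat /\
      forall n : nat, (n <= r * q)%nat -> tdist (w n) (w (n + q)%nat) < eps.

(* liminf_{q -> oo, q in Z_+} u q = 0, for a sequence u with u q >= 0
   (here every term is nonnegative, so liminf = 0 iff arbitrarily small
   values occur arbitrarily far out). *)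
Definition liminf_zero (u : nat -> R) : Prop :=
  forall (eps : R) (N : nat), 0 < eps ->
    exists q : nat, (N <= q)%nat /\ (1 <= q)%nat /\ u q < eps.

(* Main.v *)
Require Import Defs.
From Stdlib Require Import Reals Lra Lia ZArith.
Open Scope R_scope.

Lemma ND_le x (m : Z) : nint_dist x <= Rabs (x - IZR m).
Proof.
  unfold nint_dist. destruct (archimed x) as [H1 H2].
  destruct (Z_le_gt_dec (up x) m) as [Hm|Hm].
  - apply IZR_le in Hm. rewrite Rabs_left1 by lra.
    eapply Rle_trans; [apply Rmin_r|lra].
  - assert (Hm' : (m <= up x - 1)%Z) by lia. apply IZR_le in Hm'.
    rewrite minus_IZR in Hm'. simpl in Hm'.
    rewrite Rabs_right by lra.
    eapply Rle_trans; [apply Rmin_l|lra].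
Qed.

Lemma ND_eq x : exists m : Z, nint_dist x = Rabs (x - IZR m).
Proof.
  unfold nint_dist. destruct (archimed x) as [H1 H2].
  unfold Rmin. destruct (Rle_dec _ _).
  - exists (up x - 1)%Z. rewrite minus_IZR. simpl. rewrite Rabs_right by lra. lra.
  - exists (up x). rewrite Rabs_left1 by lra. lra.
Qed.

Lemma ND_nonneg x : 0 <= nint_dist x.
Proof. destruct (ND_eq x) as [m ->]. apply Rabs_pos. Qed.

Lemma ND_abs x : nint_dist x <= Rabs x.
Proof. pose proof (ND_le x 0). simpl in H. rewrite Rminus_0_r in H. exact H. Qed.

Lemma ND_shift x m : nint_dist (x + IZR m) = nint_dist x.
Proof.
  apply Rle_antisym.
  - destruct (ND_eq x) as [m0 ->]. eapply Rle_trans; [apply (ND_le _ (m0 + m))|].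
    rewrite plus_IZR. right. f_equal. ring.
  - destruct (ND_eq (x + IZR m)) as [m0 ->]. eapply Rle_trans; [apply (ND_le _ (m0 - m))|].
    rewrite minus_IZR. right. f_equal. ring.
Qed.

Lemma ND_add x y : nint_dist (x + y) <= nint_dist x + nint_dist y.
Proof.
  destruct (ND_eq x) as [m1 ->]. destruct (ND_eq y) as [m2 ->].
  eapply Rle_trans; [apply (ND_le _ (m1 + m2))|]. rewrite plus_IZR.
  replace (x + y - (IZR m1 + IZR m2)) with ((x - IZR m1) + (y - IZR m2)) by ring.
  apply Rabs_triang.
Qed.

Lemma ND_opp x : nint_dist (- x) = nint_dist x.
Proof.
  apply Rle_antisym.
  - destruct (ND_eq x) as [m ->]. eapply Rle_trans; [apply (ND_le _ (- m))|].
    rewrite opp_IZR. right. rewrite <- Rabs_Ropp. f_equal. ring.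
  - destruct (ND_eq (-x)) as [m ->]. eapply Rle_trans; [apply (ND_le _ (- m))|].
    rewrite opp_IZR. right. rewrite <- Rabs_Ropp. f_equal. ring.
Qed.

Lemma ND_sub x y : nint_dist (x - y) <= nint_dist x + nint_dist y.
Proof. unfold Rminus. rewrite <- (ND_opp y). apply ND_add. Qed.

Lemma ND_small x : Rabs x <= 1/2 -> nint_dist x = Rabs x.
Proof.
  intro Hx. apply Rle_antisym; [apply ND_abs|].
  destruct (ND_eq x) as [m Hm]. rewrite Hm.
  destruct (Z.eq_dec m 0) as [->|Hne].
  - simpl. rewrite Rminus_0_r. lra.
  - assert (1 <= Rabs (IZR m)).
    { destruct (Z_le_gt_dec 1 m).
      + apply IZR_le in l. change (IZR 1) with 1 in l. rewrite Rabs_right; lra.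
      + assert (m <= -1)%Z by lia. apply IZR_le in H. change (IZR (-1)) with (-1) in H. rewrite Rabs_left1; lra. }
    pose proof (Rabs_triang_inv (IZR m) x).
    rewrite Rabs_minus_sym. lra.
Qed.

Lemma ND_mul_nat (m : nat) x : nint_dist (INR m * x) <= INR m * nint_dist x.
Proof.
  induction m.
  - simpl. rewrite Rmult_0_l. pose proof (ND_abs 0). rewrite Rabs_R0 in H. lra.
  - rewrite S_INR. replace ((INR m + 1) * x) with (INR m * x + x) by ring.
    eapply Rle_trans; [apply ND_add|]. lra.
Qed.

Lemma lin_lemma theta delta (H : nat) : (1 <= H)%nat -> delta < 1/4 ->
  (forall h, (1 <= h <= H)%nat -> nint_dist (INR h * theta) <= delta) ->
  nint_dist theta <= delta / INR H.
Proof.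
  intros HH Hd Hb.
  destruct (ND_eq theta) as [m Hm]. set (s := theta - IZR m) in *.
  assert (Hs : Rabs s <= delta).
  { rewrite <- Hm. replace theta with (INR 1 * theta) by (simpl; ring). apply Hb. lia. }
  assert (Hc : forall h, (1 <= h <= H)%nat -> Rabs (INR h * s) <= delta).
  { induction h; intros Hh; [lia|].
    destruct (Nat.eq_dec h 0) as [->|Hn].
    - simpl. rewrite Rmult_1_l. exact Hs.
    - assert (IH := IHh ltac:(lia)).
      assert (Hl : Rabs (INR (S h) * s) <= 2 * delta).
      { rewrite S_INR. replace ((INR h + 1) * s) with (INR h * s + s) by ring.
        eapply Rle_trans; [apply Rabs_triang|]. lra. }
      rewrite <- ND_small by lra.
      replace (INR (S h) * s) with (INR (S h) * theta + IZR (- (Z.of_nat (S h) * m))).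
      2:{ unfold s. rewrite opp_IZR, mult_IZR, <- INR_IZR_INZ. ring. }
      rewrite ND_shift. apply Hb. lia. }
  specialize (Hc H ltac:(lia)). rewrite Rabs_mult, Rabs_right in Hc by (apply Rle_ge, pos_INR).
  assert (0 < INR H) by (apply lt_0_INR; lia).
  rewrite Hm. apply Rmult_le_reg_l with (INR H); auto.
  field_simplify; lra.
Qed.

Fixpoint Lead (d : nat) (c : R) (g : nat -> R) : Prop :=
  match d with
  | O => forall n, g n = c
  | S d' => forall h, Lead d' (c * INR (S d') * INR h) (fun n => g (n + h)%nat - g n)
  end.

Lemma Lead_ext d : forall c c' g g', c = c' -> (forall n, g n = g' n) -> Lead d c g -> Lead d c' g'.
Proof.
  induction d; intros c c' g g' Hc Hg H.
  - intro n. rewrite <- Hg, <- Hc. apply H.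
  - intro h. eapply IHd; [| |apply (H h)]; [rewrite Hc; reflexivity|].
    intro n. simpl. rewrite !Hg. reflexivity.
Qed.

Lemma Lead_add d : forall c c' g g', Lead d c g -> Lead d c' g' ->
  Lead d (c + c') (fun n => g n + g' n).
Proof.
  induction d; intros c c' g g' H H'.
  - intro n. simpl in *. rewrite H, H'. reflexivity.
  - intro h. eapply Lead_ext; [| |apply (IHd _ _ _ _ (H h) (H' h))].
    + ring.
    + intro n. simpl. ring.
Qed.

Lemma Lead_scale d : forall b c g, Lead d c g -> Lead d (b * c) (fun n => b * g n).
Proof.
  induction d; intros b c g H.
  - intro n. simpl in *. rewrite H. reflexivity.
  - intro h. eapply Lead_ext; [| |apply (IHd b _ _ (H h))].
    + ring.
    + intro n. simpl. ring.
Qed.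

Lemma Lead_shift d : forall m c g, Lead d c g -> Lead d c (fun n => g (n + m)%nat).
Proof.
  induction d; intros m c g H.
  - intro n. apply H.
  - intro h. eapply Lead_ext; [| |apply (IHd m _ _ (H h))].
    + reflexivity.
    + intro n. simpl. replace (n + m + h)%nat with (n + h + m)%nat by lia. reflexivity.
Qed.

Lemma Lead_mul d : forall c g, Lead d c g -> Lead (S d) c (fun n => INR n * g n).
Proof.
  induction d; intros c g H.
  - intros h n. simpl in H. rewrite !H, plus_INR. change (INR 1) with 1. ring.
  - intro h.
    pose proof (IHd _ _ (H h)) as A1.
    pose proof (Lead_scale _ (INR h) _ _ (Lead_shift (S d) h _ _ H)) as A2.
    pose proof (Lead_add _ _ _ _ _ A1 A2) as A3.
    eapply Lead_ext; [| |apply A3].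
    + rewrite (S_INR (S d)). ring.
    + intro n. simpl. rewrite plus_INR. ring.
Qed.

Lemma Lead_mono k : Lead k 1 (fun n => INR n ^ k).
Proof.
  induction k.
  - intro n. reflexivity.
  - apply Lead_mul in IHk. exact IHk.
Qed.

Lemma key d : forall c g delta (H : nat), Lead d c g -> (1 <= H)%nat -> 2 ^ d * delta < 1/4 ->
  (forall n, (n <= d * H)%nat -> nint_dist (g n) <= delta) ->
  nint_dist (c * INR (fact d)) <= 2 ^ d * delta / INR H ^ d.
Proof.
  induction d; intros c g delta H HL HH Hd Hb.
  - simpl in *. rewrite <- (HL 0%nat). replace (g 0%nat * 1) with (g 0%nat) by ring.
    replace (1 * delta / 1) with delta by field. apply Hb. lia.
  - assert (HHp : 0 < INR H) by (apply lt_0_INR; lia).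
    assert (HHd : 0 < INR H ^ d) by (apply pow_lt; lra).
    assert (Hd0 : 0 < 2 ^ d) by (apply pow_lt; lra).
    apply Rle_trans with ((2 ^ d * (2 * delta) / INR H ^ d) / INR H).
    + apply lin_lemma.
      * exact HH.
      * simpl in Hd. 
        assert (1 <= INR H ^ d).
        { rewrite <- (pow1 d). apply pow_incr. split; [lra|]. apply (le_INR 1); lia. }
        destruct (Rle_dec 0 (2 ^ d * (2 * delta))) as [Hp|Hn].
        -- apply Rle_lt_trans with (2 ^ d * (2 * delta)); [|lra].
           apply Rmult_le_reg_r with (INR H ^ d); auto.
           field_simplify; nra.
        -- assert (0 < / INR H ^ d) by (apply Rinv_0_lt_compat; lra).
           unfold Rdiv. nra.
      * intros h Hh.
        assert (IH := IHd (c * INR (S d) * INR h) _ (2 * delta) H (HL h) HH ltac:(simpl in Hd; lra)).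
        replace (INR h * (c * INR (fact (S d)))) with (c * INR (S d) * INR h * INR (fact d)).
        2:{ change (fact (S d)) with (S d * fact d)%nat. rewrite mult_INR. ring. }
        apply IH. intros n Hn. simpl.
        eapply Rle_trans; [apply ND_sub|].
        rewrite <- (Rplus_diag delta). apply Rplus_le_compat; apply Hb; simpl; lia.
    + right. simpl. field. split; lra.
Qed.

Lemma pow_diff_bound d : forall x y, 0 <= y <= x ->
  x ^ S d - y ^ S d <= INR (S d) * (x - y) * x ^ d.
Proof.
  induction d; intros x y Hxy.
  - simpl. lra.
  - pose proof (IHd x y Hxy) as IH.
    assert (Hp : y ^ S d <= x ^ S d) by (apply pow_incr; lra).
    replace (x ^ S (S d) - y ^ S (S d)) with (x * (x ^ S d - y ^ S d) + y ^ S d * (x - y))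
      by (simpl; ring).
    apply Rle_trans with (x * (INR (S d) * (x - y) * x ^ d) + x ^ S d * (x - y)).
    + apply Rplus_le_compat.
      * apply Rmult_le_compat_l; lra.
      * apply Rmult_le_compat_r; lra.
    + right. rewrite (S_INR (S d)). simpl. ring.
Qed.

Lemma nat_div k : forall n q : nat, exists z : nat, ((n + q) ^ k = n ^ k + q * z)%nat.
Proof.
  induction k; intros n q.
  - exists 0%nat. simpl. lia.
  - destruct (IHk n q) as [z Hz]. exists (n ^ k + (n + q) * z)%nat.
    rewrite !Nat.pow_succ_r'. rewrite Hz. ring.
Qed.

Theorem theorem3p5 (k : nat) (a : R) (hk : (1 <= k)%nat) :
  repetition_property (fun n : nat => a * INR n ^ k)
  <-> liminf_zero (fun q : nat => INR q ^ (k - 1) * nint_dist (a * INR q)).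
Proof.
  destruct k as [|d]; [lia|]. replace (S d - 1)%nat with d by lia.
  split.
  - intros Hrep eps N Heps.
    set (N' := S N). set (K := INR (fact (S d))).
    assert (HK : 0 < K) by (apply lt_0_INR, lt_O_fact).
    assert (HN' : 0 < INR N') by (apply lt_0_INR; unfold N'; lia).
    assert (H2 : 0 < 2 ^ d) by (apply pow_lt; lra).
    set (P := INR N' ^ S d * K ^ d * 2 ^ d).
    assert (HP : 0 < P) by (unfold P; repeat apply Rmult_lt_0_compat; auto; apply pow_lt; auto).
    set (e' := Rmin (1 / (8 * 2 ^ d)) (eps / (2 * P))).
    assert (He' : 0 < e').
    { unfold e'. apply Rmin_pos; apply Rdiv_lt_0_compat; lra. }
    assert (He1 : e' <= 1 / (8 * 2 ^ d)) by apply Rmin_l.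
    assert (He2 : e' <= eps / (2 * P)) by apply Rmin_r.
    destruct (Hrep e' (S d) He' ltac:(lia)) as [q [Hq Hb]].
    assert (HL := Lead_scale _ a _ _ (Lead_mono (S d)) q).
    assert (Hkey := key d _ _ e' q HL Hq).
    assert (Hqp : 0 < INR q) by (apply lt_0_INR; lia).
    assert (Hqd : 0 < INR q ^ d) by (apply pow_lt; lra).
    assert (Hc : 2 ^ d * e' < 1/4).
    { apply Rmult_le_compat_l with (r := 2 ^ d) in He1; [|lra].
      replace (2 ^ d * (1 / (8 * 2 ^ d))) with (1/8) in He1 by (field; lra). lra. }
    specialize (Hkey Hc).
    assert (Hkey' : nint_dist (a * INR q * K) <= 2 ^ d * e' / INR q ^ d).
    { replace (a * INR q * K) with (a * 1 * INR (S d) * INR q * INR (fact d)).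
      2:{ unfold K. change (fact (S d)) with (S d * fact d)%nat. rewrite mult_INR. ring. }
      apply Hkey. intros n Hn. specialize (Hb n ltac:(lia)).
      unfold tdist in Hb. cbv beta in *. rewrite <- ND_opp.
      replace (- (a * INR (n + q) ^ S d - a * INR n ^ S d))
        with (a * INR n ^ S d - a * INR (n + q) ^ S d) by ring. lra. }
    exists (N' * fact (S d) * q)%nat. split; [|split].
    + pose proof (lt_O_fact (S d)). unfold N'. nia.
    + pose proof (lt_O_fact (S d)). unfold N'. nia.
    + rewrite !mult_INR. fold K.
      replace (a * (INR N' * K * INR q)) with (INR N' * (a * INR q * K)) by ring.
      pose proof (ND_mul_nat N' (a * INR q * K)) as Hm.
      apply Rle_lt_trans with ((INR N' * K * INR q) ^ d * (INR N' * (2 ^ d * e' / INR q ^ d))).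
      * apply Rmult_le_compat_l; [apply pow_le; apply Rmult_le_pos; [apply Rmult_le_pos|]; lra|].
        eapply Rle_trans; [exact Hm|]. apply Rmult_le_compat_l; lra.
      * rewrite !Rpow_mult_distr.
        replace (INR N' ^ d * K ^ d * INR q ^ d * (INR N' * (2 ^ d * e' / INR q ^ d)))
          with (P * e') by (unfold P; simpl; field; lra).
        apply Rmult_le_compat_l with (r := P) in He2; [|lra].
        replace (P * (eps / (2 * P))) with (eps / 2) in He2 by (field; lra). lra.
  - intros Hlim eps r Heps Hr.
    set (C := INR (S d) * (INR r + 1) ^ d).
    assert (HC : 0 < C).
    { unfold C. apply Rmult_lt_0_compat; [apply lt_0_INR; lia|apply pow_lt].
      pose proof (pos_INR r); lra. }
    destruct (Hlim (eps / C) 1%nat ltac:(apply Rdiv_lt_0_compat; lra)) as [q [_ [Hq Hqb]]].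
    exists q. split; [exact Hq|]. intros n Hn. unfold tdist.
    destruct (nat_div (S d) n q) as [z Hz].
    destruct (ND_eq (a * INR q)) as [m Hm]. set (s := a * INR q - IZR m) in *.
    assert (Hqp : 0 < INR q) by (apply lt_0_INR; lia).
    assert (HzR : INR q * INR z = INR (n + q) ^ S d - INR n ^ S d).
    { rewrite <- !pow_INR, Hz, plus_INR, mult_INR. ring. }
    replace (a * INR n ^ S d - a * INR (n + q) ^ S d) with (- (s * INR z) + IZR (- (m * Z.of_nat z))).
    2:{ rewrite opp_IZR, mult_IZR, <- INR_IZR_INZ. unfold s.
        replace (a * INR n ^ S d - a * INR (n + q) ^ S d) with (- a * (INR q * INR z)) by (rewrite HzR; ring).
        ring. }
    rewrite ND_shift, ND_opp.
    eapply Rle_lt_trans; [apply ND_abs|]. rewrite Rabs_mult, (Rabs_right (INR z)) by (apply Rle_ge, pos_INR).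
    assert (Hzb : INR z <= C * INR q ^ d).
    { pose proof (pow_diff_bound d (INR (n + q)) (INR n)) as Hd.
      rewrite plus_INR in Hd, HzR.
      assert (0 <= INR n) by apply pos_INR.
      specialize (Hd ltac:(lra)). rewrite <- HzR in Hd.
      replace (INR n + INR q - INR n) with (INR q) in Hd by ring.
      assert (Hnq : INR n + INR q <= (INR r + 1) * INR q).
      { apply le_INR in Hn. rewrite mult_INR in Hn. lra. }
      assert (Hpw : (INR n + INR q) ^ d <= ((INR r + 1) * INR q) ^ d) by (apply pow_incr; lra).
      rewrite Rpow_mult_distr in Hpw.
      assert (INR z <= INR (S d) * (INR n + INR q) ^ d).
      { apply Rmult_le_reg_l with (INR q); auto. nra. }
      unfold C. apply Rle_trans with (1 := H0).
      rewrite Rmult_assoc. apply Rmult_le_compat_l; [apply pos_INR|exact Hpw]. }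
    assert (Hs0 : 0 <= Rabs s) by apply Rabs_pos.
    apply Rle_lt_trans with (Rabs s * (C * INR q ^ d)).
    + apply Rmult_le_compat_l; auto.
    + rewrite <- Hm.
      apply Rmult_lt_compat_l with (r := C) in Hqb; auto.
      replace (C * (eps / C)) with eps in Hqb by (field; lra). lra.
Qed.
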